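(* For every $n\geq 1$, all vertex degrees in the Fibonacci-sum set-graph $G^F_{A^{(n)}}$ are even.
   Context: Let $\mathcal{F}=\{f_m\}_{m\ge 0}$ be the Fibonacci numbers, $f_0=0$, $f_1=1$, $f_m=f_{m-1}+f_{m-2}$. The Fibonacci-sum set-graph $G^F_{A^{(n)}}$ is the multigraph (loops and multiple edges allowed) whose vertices are in bijection with the nonempty subsets of $A^{(n)}=\{1,\dots,n\}$; between the vertices corresponding to distinct subsets $S,T$ there is one edge for each pair $(i',j')$ with $i'\in S$, $j'\in T$, $i'\neq j'$ and $i'+j'\in\mathcal{F}$, and at the vertex corresponding to $S$ there is one loop for each pair of distinct elements $i',j'\in S$ with $i'+j'\in\mathcal{F}$. The degree of a vertex $v$ is $2l(v)+\sum_{u\neq v}\epsilon(v,u)$, where $l(v)$ is the number of loops at $v$ and $\epsilon(v,u)$ the number of edges between $v$ and $u$. *)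

(* Defs.v *)
From mathcomp Require Import all_boot.
From Stdlib Require Import ClassicalEpsilon.
Set Implicit Arguments. Unset Strict Implicit. Unset Printing Implicit Defensive.

Fixpoint fib (m : nat) : nat :=
  match m with
  | 0 => 0
  | 1 => 1
  | (m'.+1 as k).+1 => fib k + fib m'
  end.

Definition inFib (k : nat) : bool :=
  if excluded_middle_informative (exists m, fib m = k) then true else false.

(* A^(n) = {1,...,n} is represented by 'I_n, element i : 'I_n standing for i+1.
   Vertices of G^F_{A^(n)} are the nonempty S : {set 'I_n}. *)
Definition elt n (i : 'I_n) : nat := i.+1.

(* l(S): loops at S, one per unordered pair of distinct elements i', j' of S
   with i' + j' Fibonacci (counted as pairs with i' < j'). *)
Definition loops n (S : {set 'I_n}) : nat :=
  #|[set p : 'I_n * 'I_n | [&& (p.1 < p.2)%N, p.1 \in S, p.2 \in S &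
                             inFib (elt p.1 + elt p.2)]]|.

Definition edges n (S T : {set 'I_n}) : nat :=
  #|[set p : 'I_n * 'I_n | [&& p.1 \in S, p.2 \in T, p.1 != p.2 &
                             inFib (elt p.1 + elt p.2)]]|.

Definition degree n (S : {set 'I_n}) : nat :=
  2 * loops S + \sum_(T : {set 'I_n} | (T != set0) && (T != S)) edges S T.

(* Main.v *)
Require Import Defs.
From mathcomp Require Import all_boot.
Set Warnings "-notation-overridden".

Lemma card_contain n (j : 'I_n) :
  #|[set T : {set 'I_n} | j \in T]| = 2 ^ n.-1.
Proof.
have -> : n.-1 = #|[set~ j]| by rewrite cardsC1 card_ord.
rewrite -card_powerset.
have -> : powerset [set~ j] = [set T :\ j | T in [set T : {set 'I_n} | j \in T]].
  apply/setP => U; rewrite inE; apply/idP/imsetP.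
    move=> sU; exists (j |: U); first by rewrite inE setU11.
    apply/setP => x; rewrite !inE; case: eqP => // ->.
    by apply/negP => /(subsetP sU); rewrite !inE eqxx.
  case=> T _ ->; apply/subsetP => x; rewrite !inE; case/andP => //.
rewrite card_in_imset // => T1 T2; rewrite !inE => h1 h2 e.
by rewrite -(setD1K h1) -(setD1K h2) e.
Qed.

Lemma card_cnt n (S : {set 'I_n}) (j : 'I_n) :
  #|[set T : {set 'I_n} | (T != set0) && (T != S) && (j \in T)]| + (j \in S)
  = 2 ^ n.-1.
Proof.
rewrite -(@card_contain n j) (cardD1 S [set T : {set 'I_n} | j \in T]) inE addnC; congr (_ + _).
apply: eq_card => T; rewrite !inE; case: (T =P S) => [->|_] /=; first by rewrite !andbF.
have [->|Tn0] := eqVneq T set0; first by rewrite inE.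
by [].
Qed.

Lemma Q_loops n (S : {set 'I_n}) :
  #|[set p : 'I_n * 'I_n | [&& p.1 \in S, p.1 != p.2, inFib (elt p.1 + elt p.2)
      & p.2 \in S]]| = 2 * loops S.
Proof.
set Q := [set p | _].
pose B := [set p : 'I_n * 'I_n | (p.1 < p.2)%N].
rewrite -(cardsID B Q) mul2n -addnn.
have eL : #|Q :&: B| = loops S.
  rewrite /loops; apply: eq_card => p; rewrite !inE.
  case: (ltnP p.1 p.2) => h; rewrite ?andbF ?andbT //=.
  have -> : p.1 != p.2 by rewrite neq_ltn h.
  by apply/and4P/and3P => [[a _ b c]|[a b c]]; split.
rewrite eL; congr (_ + _).
have -> : Q :\: B = [set (p.2, p.1) | p in Q :&: B].
  apply/setP => -[a b]; rewrite !inE /=; apply/idP/imsetP.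
    case/andP => nab /and4P [aS neq fab bS].
    exists (b, a); last by [].
    rewrite !inE /= bS aS eq_sym neq addnC fab /=.
    by rewrite ltn_neqAle eq_sym neq leqNgt nab.
  case=> -[c d]; rewrite !inE /= => /andP [/and4P [cS neq fcd dS] lcd] [-> ->] /=.
  by rewrite -leqNgt ltnW // dS cS eq_sym neq addnC fcd.
rewrite card_imset // => -[a b] [c d] /= [-> ->] //.
Qed.

Theorem theorem2p7 (n : nat) : (1 <= n)%N ->
  forall S : {set 'I_n}, S != set0 -> ~~ odd (degree S).
Proof.
move=> n1 S _.
pose E := [set p : 'I_n * 'I_n | [&& p.1 \in S, p.1 != p.2 & inFib (elt p.1 + elt p.2)]].
have eE T : edges S T = \sum_(p in E) (p.2 \in T).
  rewrite /edges -sum1_card big_mkcond [RHS]big_mkcond; apply: eq_bigr => p _.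
  rewrite !inE; case: (p.1 \in S) => //=; case: (p.1 != p.2) => //=;
    case: (inFib _) => //=; rewrite ?andbF ?andbT //; by case: (p.2 \in T).
have key : degree S + 2 * loops S = 2 * loops S + #|E| * 2 ^ n.-1.
  rewrite /degree -addnA; congr (_ + _).
  under eq_bigr => T _ do rewrite eE.
  rewrite exchange_big /= -Q_loops.
  set Q := [set p | _].
  have eQ : #|Q| = \sum_(p in E) (p.2 \in S).
    rewrite -sum1_card big_mkcond [RHS]big_mkcond; apply: eq_bigr => p _.
    rewrite !inE; case: (p.1 \in S) => //=; case: (p.1 != p.2) => //=;
      case: (inFib _) => //=; by case: (p.2 \in S).
  rewrite eQ -big_split -sum_nat_const /=; apply: eq_bigr => p _.
  rewrite -(@card_cnt n S p.2); congr (_ + _).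
  rewrite -sum1_card big_mkcond [RHS]big_mkcond; apply: eq_bigr => T _.
  rewrite !inE; case: (_ && _) => //=.
have hE : ~~ odd (#|E| * 2 ^ n.-1).
  case: (ltnP 1 n) => hn.
    rewrite oddM oddX /= orbF (_ : (n.-1 == 0) = false) ?andbF //.
    by move: hn; case: (n) => [|[|k]].
  suff -> : #|E| = 0 by [].
  apply/eqP; rewrite cards_eq0; apply/eqP/setP => p; rewrite !inE.
  have h0 (i : 'I_n) : (i : nat) = 0.
    by apply/eqP; rewrite -leqn0 -ltnS (leq_trans (ltn_ord _) hn).
  have -> : p.1 = p.2 by apply: val_inj; rewrite /= !h0.
  by rewrite eqxx andbF.
move: (congr1 odd key); rewrite mul2n !oddD odd_double /= addbF => ->.
by move/negbTE: hE => ->.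
Qed.
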